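(* Let $n\ge 1$, $k\ge 2$, $\mathcal{K}$ a set of size $k$, $\epsilon\ge 0$ and $p=e^\epsilon/(k-1+e^\epsilon)$. Then $\mathbf{S}\mathbf{N}\equiv\mathbf{S}^r\mathbf{N}^r$.
   Context: A dataset is $x\in\mathcal{K}^n$; its histogram $h(x)$ is the map $\kappa\mapsto|\{i:x_i=\kappa\}|$; $\mathcal{Z}$ is the set of histograms and $\#z$ the number of datasets with histogram $z$. Channels are row-stochastic matrices; cascading is matrix multiplication. Full $k$-RR channel $\mathbf{N}:\mathcal{K}^n\to\mathcal{K}^n$: $\mathbf{N}_{x,y}=\prod_{i=0}^{n-1}q(y_i\mid x_i)$, $q(b\mid a)=p$ if $b=a$, $(1-p)/(k-1)$ otherwise. Shuffle channel $\mathbf{S}:\mathcal{K}^n\to\mathcal{K}^n$: $\mathbf{S}_{x,y}=1/\#h(x)$ if $h(y)=h(x)$, else $0$. Reduced shuffle $\mathbf{S}^r:\mathcal{K}^n\to\mathcal{Z}$: $\mathbf{S}^r_{x,z}=1$ if $h(x)=z$, else $0$. Reduced $k$-RR $\mathbf{N}^r:\mathcal{Z}\to\mathcal{Z}$: $\mathbf{N}^r_{z',z}=\frac{1}{\#z'}\sum_{x':h(x')=z'}\sum_{y:h(y)=z}\mathbf{N}_{x',y}$. For prior $\pi$ and gain function $g:\mathcal{W}\times\mathcal{X}\to[0,\infty)$ ($\mathcal{W}$ finite nonempty), $V_g[\pi\triangleright\mathbf{C}]=\sum_{y}\max_{w}\sum_{x}\pi_x\mathbf{C}_{x,y}g(w,x)$;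 channels with the same input set are equivalent ($\equiv$) iff they have equal posterior vulnerability for all priors and gain functions. *)

(* Defs.v *)
From HB Require Import structures.
From mathcomp Require Import all_boot all_order all_algebra.
From mathcomp Require Import reals.
From mathcomp.analysis Require Import sequences exp.
Set Implicit Arguments. Unset Strict Implicit. Unset Printing Implicit Defensive.
Import Order.TTheory GRing.Theory Num.Theory.
Local Open Scope ring_scope.

Section Channels.
Variable R : realType.

(* A channel from X to Y is a matrix X -> Y -> R (row-stochastic by construction below). *)
Definition channel (X Y : finType) := X -> Y -> R.

Definition cascade (X M Y : finType) (C : channel X M) (D : channel M Y) : channel X Y :=
  fun x y => \sum_(m : M) C x m * D m y.

(* maximum over a (nonempty) finite type; 0 if empty (never used: W nonempty) *)
Definition fmax (W : finType) (F : W -> R) : R :=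
  match [pick w : W] with
  | Some w0 => \big[Num.max/F w0]_(w : W) F w
  | None => 0
  end.

Definition Vg (X Y W : finType) (pi : X -> R) (C : channel X Y) (g : W -> X -> R) : R :=
  \sum_(y : Y) fmax (fun w : W => \sum_(x : X) pi x * C x y * g w x).

Definition chan_equiv (X Y1 Y2 : finType) (C1 : channel X Y1) (C2 : channel X Y2) : Prop :=
  forall (W : finType), (0 < #|W|)%N ->
  forall (pi : X -> R) (g : W -> X -> R),
    (forall x, 0 <= pi x) -> \sum_(x : X) pi x = 1 ->
    (forall w x, 0 <= g w x) ->
    Vg pi C1 g = Vg pi C2 g.

Variables (K : finType) (n : nat).

Definition dataset := {ffun 'I_n -> K}.

Definition hist (x : dataset) : {ffun K -> nat} := [ffun a => #|[set i | x i == a]|].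

(* The set Z of histograms: maps K -> nat summing to n (values are <= n). *)
Definition histZ := {z : {ffun K -> 'I_n.+1} | (\sum_(a : K) (z a : nat))%N == n}.
Definition zfun (z : histZ) : {ffun K -> nat} := [ffun a => (val z a : nat)].

Definition numds (z : {ffun K -> nat}) : nat := #|[set x : dataset | hist x == z]|.

Definition q (p : R) (b a : K) : R :=
  if b == a then p else (1 - p) / (#|K|%:R - 1).

Definition kRR (p : R) : channel dataset dataset :=
  fun x y => \prod_(i < n) q p (y i) (x i).

Definition shuffle : channel dataset dataset :=
  fun x y => if hist y == hist x then 1 / (numds (hist x))%:R else 0.

Definition rshuffle : channel dataset histZ :=
  fun x z => if hist x == zfun z then 1 else 0.

Definition rkRR (p : R) : channel histZ histZ :=
  fun z' z => 1 / (numds (zfun z'))%:R *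
    \sum_(x' : dataset | hist x' == zfun z') \sum_(y : dataset | hist y == zfun z) kRR p x' y.

End Channels.

(* Main.v *)
Require Import Defs.
From HB Require Import structures.
From mathcomp Require Import all_boot all_order all_algebra.
From mathcomp Require Import fingroup perm.
From mathcomp Require Import reals.
From mathcomp.analysis Require Import sequences exp.
Set Implicit Arguments. Unset Strict Implicit. Unset Printing Implicit Defensive.
Import Order.TTheory GRing.Theory Num.Theory.
Local Open Scope ring_scope.

Section S.
Variables (R : realType) (K : finType) (n : nat).
Local Notation ds := (dataset K n).

Lemma count_tup (y : ds) a : count_mem a [tuple y i | i < n] = #|[set i | y i == a]|.
Proof.
rewrite /= count_map cardE /enum_mem -size_filter /=.
congr size; rewrite -filter_predI; apply: eq_filter => i /=.
by rewrite andbT in_set.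
Qed.

Lemma hist_eq_perm (y y' : ds) : hist y = hist y' ->
  exists s : 'S_n, forall i, y' i = y (s i).
Proof.
move=> H.
have : perm_eq [tuple y' i | i < n] [tuple y i | i < n].
  rewrite /perm_eq; apply/allP => a _; rewrite /= !count_tup.
  by have := congr1 (fun h : {ffun K -> nat} => h a) H; rewrite !ffunE => ->.
case/tuple_permP => s E; exists s => i.
have := congr1 (fun t : n.-tuple K => tnth t i) (val_inj E).
by rewrite /= !tnth_mktuple.
Qed.

Definition permds (s : 'S_n) (y : ds) : ds := [ffun i => y (s i)].

Lemma hist_permds s y : hist (permds s y) = hist y.
Proof.
apply/ffunP => a; rewrite !ffunE.
have -> : [set i | permds s y i == a] = s @^-1: [set i | y i == a].
  by apply/setP => i; rewrite !inE ffunE.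
by rewrite card_preimset //; exact: perm_inj.
Qed.

Lemma permds_inj s : injective (permds s).
Proof.
move=> x y /ffunP H; apply/ffunP => i; have := H ((s^-1)%g i).
by rewrite !ffunE permKV.
Qed.

Lemma kRR_perm (p : R) s x y : kRR p (permds s x) (permds s y) = kRR p x y.
Proof.
rewrite /kRR [RHS](reindex_inj (@perm_inj _ s)).
by apply: eq_bigr => i _; rewrite !ffunE.
Qed.

Definition C1 (p : R) := cascade (@shuffle R K n) (@kRR R K n p).

Lemma C1_perm p x y s : C1 p x (permds s y) = C1 p x y.
Proof.
rewrite /C1 /cascade [LHS](reindex_inj (@permds_inj s)).
by apply: eq_bigr => m _; rewrite kRR_perm /shuffle hist_permds.
Qed.

Lemma C1_hist p x y y' : hist y = hist y' -> C1 p x y' = C1 p x y.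
Proof.
case/hist_eq_perm => s Hs.
have -> : y' = permds s y by apply/ffunP => i; rewrite ffunE Hs.
exact: C1_perm.
Qed.

Lemma hist_le (y : ds) a : (hist y a < n.+1)%N.
Proof. by rewrite ffunE ltnS; apply: leq_trans (max_card _) _; rewrite card_ord. Qed.

Lemma hist_sum (y : ds) : (\sum_a hist y a)%N = n.
Proof.
rewrite -[RHS]card_ord -sum1_card (partition_big y predT) //=.
apply: eq_bigr => a _; rewrite ffunE -sum1_card.
by apply: eq_bigl => i; rewrite inE.
Qed.

Lemma toZ_proof (y : ds) :
  (\sum_(a : K) (([ffun a => Ordinal (hist_le y a)] : {ffun K -> 'I_n.+1}) a : nat))%N == n.
Proof.
apply/eqP; rewrite -[X in _ = X](hist_sum y); apply: eq_bigr => a _; by rewrite ffunE.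
Qed.

Definition toZ (y : ds) : histZ K n := exist _ [ffun a => Ordinal (hist_le y a)] (toZ_proof y).


Lemma zfun_toZ y : zfun (toZ y) = hist y.
Proof. by apply/ffunP => a; rewrite !ffunE /= ffunE. Qed.

Lemma zfun_inj : injective (@zfun K n).
Proof.
move=> z1 z2 /ffunP H; apply/val_inj/ffunP => a; apply/val_inj.
by have := H a; rewrite !ffunE.
Qed.

Lemma toZP y z : (toZ y == z) = (hist y == zfun z).
Proof. by rewrite -zfun_toZ; apply/eqP/eqP => [->|/zfun_inj]. Qed.

Lemma C2E p x z : cascade (@rshuffle R K n) (@rkRR R K n p) x z
  = \sum_(y | toZ y == z) C1 p x y.
Proof.
rewrite /cascade (bigD1 (toZ x)) //= big1 ?addr0; last first.
  move=> z' nz; rewrite /rshuffle; case: eqP => [H|]; last by rewrite mul0r.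
  by case/eqP: nz; apply: zfun_inj; rewrite zfun_toZ H.
rewrite /rshuffle zfun_toZ eqxx mul1r /rkRR zfun_toZ /C1 /cascade.
rewrite [RHS]exchange_big /= [in LHS]big_mkcond mulr_sumr; apply: eq_bigr => m _ /=.
rewrite /shuffle; case: ifP => _.
  by rewrite mulr_sumr; apply: eq_bigl => y; rewrite toZP.
by rewrite mulr0 big1 // => y _; rewrite mul0r.
Qed.

Lemma eq_fmax (W : finType) (F G : W -> R) : F =1 G -> fmax F = fmax G.
Proof.
move=> FG; rewrite /fmax; case: pickP => // w0 _.
by rewrite FG; apply: eq_bigr => w _.
Qed.

Lemma fmax_mulrn (W : finType) (F : W -> R) N :
  fmax (fun w => F w *+ N) = fmax F *+ N.
Proof.
rewrite /fmax; case: pickP => [w0 _|_]; last by rewrite mul0rn.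
have Hm : {morph (fun a : R => a *+ N) : a b / Num.max a b >-> Num.max a b}.
  move=> a b /=; have E (c : R) : c *+ N = N%:R * c by rewrite mulr_natl.
  by rewrite (E a) (E b) (E (Num.max a b)) maxr_pMr // ler0n.
symmetry; exact: (big_morph _ Hm (erefl _)).
Qed.

Lemma sum_fmax (I W : finType) (P : pred I) (A : I -> W -> R) (A0 : W -> R) :
  (forall i, P i -> forall w, A i w = A0 w) ->
  \sum_(i | P i) fmax (A i) = fmax (fun w => \sum_(i | P i) A i w).
Proof.
move=> H.
rewrite (eq_bigr (fun _ => fmax A0)); last by move=> i Pi; apply: eq_fmax => w; apply: H.
rewrite sumr_const -fmax_mulrn; apply: eq_fmax => w /=.
rewrite (eq_bigr (fun _ => A0 w)); last by move=> i Pi; apply: H.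
by rewrite sumr_const.
Qed.

End S.

Unset Implicit Arguments.
Set Strict Implicit.

Theorem mainTheorem5 (R : realType) (n : nat) (K : finType) (eps : R) :
  (1 <= n)%N -> (2 <= #|K|)%N -> 0 <= eps ->
  let p := expR eps / (#|K|%:R - 1 + expR eps) in
  chan_equiv (cascade (@shuffle R K n) (@kRR R K n p))
             (cascade (@rshuffle R K n) (@rkRR R K n p)).
Proof.
move=> _ _ _ p W _ pi g _ _ _.
rewrite /Vg (partition_big (@toZ K n) predT) //=.
apply: eq_bigr => z _.
pose A := fun y w => \sum_x pi x * C1 p x y * g w x.
have [A0 HA0] : exists A0 : W -> R, forall y, toZ y == z -> forall w, A y w = A0 w.
  case: (pickP (fun y => toZ y == z)) => [y0 Hy0|Hn].
    exists (A y0) => y Hy w; rewrite /A; apply: eq_bigr => x _.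
    congr (_ * _ * _); apply: C1_hist.
    by move: Hy Hy0; rewrite !toZP => /eqP -> /eqP ->.
  by exists (fun _ => 0) => y; rewrite Hn.
rewrite (sum_fmax HA0); apply: eq_fmax => w; rewrite /A exchange_big.
apply: eq_bigr => x _ /=.
by rewrite C2E -mulr_suml -mulr_sumr.
Qed.
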